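(* If $T\leq T'$ is derivable in the system of subtyping rules below extended with the reflexivity rule $T\leq T$ and the transitivity rule (from $T\leq T'$ and $T'\leq T''$ infer $T\leq T''$), then $T\leq T'$ is derivable using only the rules below.
   Context: Types: raw types $R ::= \alpha \mid S\rightarrow T$ ($\alpha$ ranging over atomic types), subsidiary types $S ::= \bigcap R$ (a finite formal intersection $R_1\cap\dots\cap R_n$, $n\geq 0$; the empty one is written $\omega$), types $T ::= \bigcup S$ (a finite formal union $S_1\cup\dots\cup S_n$, $n\ge 0$; the empty one is written $\mho$). Intersections and unions are taken modulo associativity and commutativity only (not idempotence); a raw type is identified with a one-element intersection and a subsidiary type with a one-element union. Subtyping rules ($S,S',S'',S_i$ subsidiary types; $T,T',T'',T_i$ types; $i$ over a finite, possibly empty, index set): $\alpha\leq\alpha$; from $S'\leq S$ and $T\leq T'$ infer $S\rightarrow T\leq S'\rightarrow T'$; from $S\leq S'$ infer $S\cap S''\leq S'$; from $S\leq S_i$ for all $i$ infer $S\leq\bigcap_i S_i$; from $T\leq T'$ infer $T\leq T''\cup T'$; from $T_i\leq T$ for all $i$ infer $\bigcup_i T_i\leq T$. *)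

(* Defs.v *)
From Stdlib Require Import List Permutation.
Import ListNotations.
Set Implicit Arguments.

(* Raw types R ::= alpha | S -> T, over an arbitrary type A of atoms.
   A subsidiary type S = finite formal intersection of raw types = list raw.
   A type T = finite formal union of subsidiary types = list (list raw). *)
Inductive raw (A : Type) : Type :=
| Atom : A -> raw A
| Arrow : list (raw A) -> list (list (raw A)) -> raw A.
Arguments Atom {A} _.
Arguments Arrow {A} _ _.

Definition subs (A : Type) := list (raw A).
Definition ty (A : Type) := list (subs A).

(* Identification modulo associativity and commutativity (not idempotence),
   at every depth: lists are equal up to permutation, componentwise. *)
Inductive raw_eqv {A : Type} : raw A -> raw A -> Prop :=
| req_atom a : raw_eqv (Atom a) (Atom a)
| req_arrow (S S0 S' : list (raw A)) (T T0 T' : list (list (raw A))) :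
    Permutation S S0 -> Forall2 raw_eqv S0 S' ->
    Permutation T T0 ->
    Forall2 (fun X Y => exists X0, Permutation X X0 /\ Forall2 raw_eqv X0 Y) T0 T' ->
    raw_eqv (Arrow S T) (Arrow S' T').

Definition subs_eqv {A : Type} (S S' : subs A) : Prop :=
  exists S0, Permutation S S0 /\ Forall2 raw_eqv S0 S'.

Definition ty_eqv {A : Type} (T T' : ty A) : Prop :=
  exists T0, Permutation T T0 /\ Forall2 subs_eqv T0 T'.

(* A raw type r is identified with the one-element intersection [r], and a
   subsidiary type S with the one-element union [S]; so the judgement is a
   single relation on types.  Intersection of subsidiary types and union of
   types are list concatenation.  [ext = true] adds reflexivity and
   transitivity; [ext = false] is the system of the listed rules only.
   Rule [sub_conv] expresses that types are taken modulo AC. *)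
Inductive sub {A : Type} (ext : bool) : ty A -> ty A -> Prop :=
| sub_atom (a : A) : sub ext [[Atom a]] [[Atom a]]
| sub_arrow (S S' : subs A) (T T' : ty A) :
    sub ext [S'] [S] -> sub ext T T' -> sub ext [[Arrow S T]] [[Arrow S' T']]
| sub_interL (S S' S'' : subs A) :
    sub ext [S] [S'] -> sub ext [S ++ S''] [S']
| sub_interR (S : subs A) (Ss : list (subs A)) :
    (forall Si, In Si Ss -> sub ext [S] [Si]) -> sub ext [S] [concat Ss]
| sub_unionR (T T' T'' : ty A) :
    sub ext T T' -> sub ext T (T'' ++ T')
| sub_unionL (Ts : list (ty A)) (T : ty A) :
    (forall Ti, In Ti Ts -> sub ext Ti T) -> sub ext (concat Ts) T
| sub_conv (T1 T1' T2 T2' : ty A) :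
    ty_eqv T1 T1' -> ty_eqv T2 T2' -> sub ext T1' T2' -> sub ext T1 T2
| sub_refl (T : ty A) : ext = true -> sub ext T T
| sub_trans (T T' T'' : ty A) :
    ext = true -> sub ext T T' -> sub ext T' T'' -> sub ext T T''.

(* Main.v *)
Require Import Defs.
From Stdlib Require Import List Permutation.
Import ListNotations.

Section Ind.
Variable A : Type.
Variable P : raw A -> Prop.
Hypothesis Hatom : forall a, P (Atom a).
Hypothesis Harr : forall S T, Forall P S -> Forall (Forall P) T -> P (Arrow S T).
Fixpoint raw_ind' (r : raw A) : P r :=
  match r with
  | Atom a => Hatom a
  | Arrow Sx Tx => Harr Sx Tx
     ((fix f (l : list (raw A)) : Forall P l :=
        match l with [] => Forall_nil _ | x :: l' => Forall_cons _ (raw_ind' x) (f l') end) Sx)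
     ((fix g (L : list (list (raw A))) : Forall (Forall P) L :=
        match L with [] => Forall_nil _
        | X :: L' => Forall_cons _
            ((fix f (l : list (raw A)) : Forall P l :=
              match l with [] => Forall_nil _ | x :: l' => Forall_cons _ (raw_ind' x) (f l') end) X)
            (g L') end) Tx)
  end.
End Ind.

Inductive le_raw {A : Type} : raw A -> raw A -> Prop :=
| le_atom a : le_raw (Atom a) (Atom a)
| le_arr S T S' T' :
    (forall y, In y S -> exists x, In x S' /\ le_raw x y) ->
    (forall X, In X T -> exists Y, In Y T' /\ forall y, In y Y -> exists x, In x X /\ le_raw x y) ->
    le_raw (Arrow S T) (Arrow S' T').

Definition le_subs {A} (S S' : subs A) := forall y, In y S' -> exists x, In x S /\ le_raw x y.
Definition le_ty {A} (T T' : ty A) := forall X, In X T -> exists Y, In Y T' /\ le_subs X Y.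

Lemma F2_l {X Y} (R : X -> Y -> Prop) l l' x :
  Forall2 R l l' -> In x l -> exists y, In y l' /\ R x y.
Proof.
  induction 1; simpl; [tauto|]. intros [<-|Hi].
  - eauto.
  - destruct (IHForall2 Hi) as [y1 [? ?]]; eauto.
Qed.

Lemma F2_r {X Y} (R : X -> Y -> Prop) l l' y :
  Forall2 R l l' -> In y l' -> exists x, In x l /\ R x y.
Proof.
  induction 1; simpl; [tauto|]. intros [<-|Hi].
  - eauto.
  - destruct (IHForall2 Hi) as [y1 [? ?]]; eauto.
Qed.

Lemma le_raw_trans {A} (r2 : raw A) : forall r1 r3, le_raw r1 r2 -> le_raw r2 r3 -> le_raw r1 r3.
Proof.
  induction r2 as [a|S T HS HT] using raw_ind'; intros r1 r3 H1 H2.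
  - inversion H1; subst; inversion H2; subst; constructor.
  - inversion H1 as [|S1 T1 S0 T0 HS1 HT1]; subst.
    inversion H2 as [|S2 T2 S3 T3 HS3 HT3]; subst.
    rewrite Forall_forall in HS, HT.
    constructor.
    + intros y Hy. destruct (HS1 y Hy) as [x [Hx Hxy]].
      destruct (HS3 x Hx) as [z [Hz Hzx]].
      exists z; split; auto. eapply HS; eauto.
    + intros X1 HX1. destruct (HT1 X1 HX1) as [X [HX HX1X]].
      destruct (HT3 X HX) as [X3 [HX3 HXX3]].
      exists X3; split; auto. intros y Hy.
      destruct (HXX3 y Hy) as [x [Hx Hxy]].
      destruct (HX1X x Hx) as [z [Hz Hzx]].
      exists z; split; auto.
      specialize (HT X HX). rewrite Forall_forall in HT. eapply HT; eauto.
Qed.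

Lemma le_raw_refl {A} (r : raw A) : le_raw r r.
Proof.
  induction r as [a|S T HS HT] using raw_ind'.
  - constructor.
  - rewrite Forall_forall in HS, HT. constructor.
    + intros y Hy; exists y; auto.
    + intros X HX; exists X; split; auto. intros y Hy; exists y; split; auto.
      specialize (HT X HX); rewrite Forall_forall in HT; auto.
Qed.

Lemma le_subs_trans {A} (S1 S2 S3 : subs A) : le_subs S1 S2 -> le_subs S2 S3 -> le_subs S1 S3.
Proof.
  intros H1 H2 y Hy. destruct (H2 y Hy) as [x [Hx Hxy]].
  destruct (H1 x Hx) as [z [Hz Hzx]]. exists z; split; auto. eapply le_raw_trans; eauto.
Qed.

Lemma le_ty_trans {A} (T1 T2 T3 : ty A) : le_ty T1 T2 -> le_ty T2 T3 -> le_ty T1 T3.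
Proof.
  intros H1 H2 X HX. destruct (H1 X HX) as [Y [HY HXY]].
  destruct (H2 Y HY) as [Z [HZ HYZ]]. exists Z; split; auto. eapply le_subs_trans; eauto.
Qed.

Lemma eqv_le {A} (r : raw A) : forall r', raw_eqv r r' -> le_raw r r' /\ le_raw r' r.
Proof.
  induction r as [a|S T HS HT] using raw_ind'; intros r' H.
  - inversion H; subst; split; constructor.
  - inversion H as [|S1 S0 S' T1 T0 T' HpS HfS HpT HfT]; subst.
    rewrite Forall_forall in HS, HT.
    split; constructor.
    + intros y Hy. destruct (F2_l _ _ _ _ HfS (Permutation_in _ HpS Hy)) as [x [Hx Hxy]].
      exists x; split; auto. apply (proj2 (HS y Hy x Hxy)).
    + intros X HX. destruct (F2_l _ _ _ _ HfT (Permutation_in _ HpT HX)) as [Y [HY [X0 [HpX HfX]]]].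
      exists Y; split; auto. intros y Hy.
      destruct (F2_r _ _ _ _ HfX Hy) as [x [Hx Hxy]].
      assert (Hx' : In x X) by exact (Permutation_in _ (Permutation_sym HpX) Hx).
      exists x; split; auto. specialize (HT X HX); rewrite Forall_forall in HT.
      apply (proj1 (HT x Hx' y Hxy)).
    + intros y Hy. destruct (F2_r _ _ _ _ HfS Hy) as [x [Hx Hxy]].
      exists x; split. apply (Permutation_in _ (Permutation_sym HpS) Hx).
      apply (proj1 (HS x (Permutation_in _ (Permutation_sym HpS) Hx) y Hxy)).
    + intros Y HY. destruct (F2_r _ _ _ _ HfT HY) as [X [HX [X0 [HpX HfX]]]].
      assert (HX' : In X T) by exact (Permutation_in _ (Permutation_sym HpT) HX).
      exists X; split; auto. intros y Hy.
      destruct (F2_l _ _ _ _ HfX (Permutation_in _ HpX Hy)) as [x [Hx Hxy]].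
      exists x; split; auto. specialize (HT X HX'); rewrite Forall_forall in HT.
      apply (proj2 (HT y Hy x Hxy)).
Qed.

Lemma subs_eqv_le {A} (S S' : subs A) : subs_eqv S S' -> le_subs S S' /\ le_subs S' S.
Proof.
  intros [S0 [Hp Hf]]. split.
  - intros y Hy. destruct (F2_r _ _ _ _ Hf Hy) as [x [Hx Hxy]].
    exists x; split. exact (Permutation_in _ (Permutation_sym Hp) Hx). apply (eqv_le _ _ Hxy).
  - intros y Hy. destruct (F2_l _ _ _ _ Hf (Permutation_in _ Hp Hy)) as [x [Hx Hxy]].
    exists x; split; auto. apply (eqv_le _ _ Hxy).
Qed.

Lemma ty_eqv_le {A} (T T' : ty A) : ty_eqv T T' -> le_ty T T' /\ le_ty T' T.
Proof.
  intros [T0 [Hp Hf]]. split.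
  - intros X HX. destruct (F2_l _ _ _ _ Hf (Permutation_in _ Hp HX)) as [Y [HY HXY]].
    exists Y; split; auto. apply (subs_eqv_le _ _ HXY).
  - intros Y HY. destruct (F2_r _ _ _ _ Hf HY) as [X [HX HXY]].
    exists X; split. exact (Permutation_in _ (Permutation_sym Hp) HX). apply (subs_eqv_le _ _ HXY).
Qed.

Lemma le_ty_refl {A} (T : ty A) : le_ty T T.
Proof. intros X HX; exists X; split; auto. intros y Hy; exists y; split; auto. apply le_raw_refl. Qed.

Lemma sound {A} b (T T' : ty A) : sub b T T' -> le_ty T T'.
Proof.
  induction 1.
  - apply le_ty_refl.
  - intros X [<-|[]]. exists [Arrow S' T']; split; [left; auto|].
    intros y [<-|[]]. exists (Arrow S T); split; [left; auto|].
    constructor.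
    + destruct (IHsub1 S' (or_introl eq_refl)) as [Y [[<-|[]] HY]]. exact HY.
    + exact IHsub2.
  - intros X [<-|[]]. exists S'; split; [left; auto|].
    destruct (IHsub S (or_introl eq_refl)) as [Y [[<-|[]] HY]].
    intros y Hy. destruct (HY y Hy) as [x [Hx Hxy]]. exists x; split; auto.
    apply in_or_app; auto.
  - intros X [<-|[]]. exists (concat Ss); split; [left; auto|].
    intros y Hy. apply in_concat in Hy. destruct Hy as [Si [HSi Hy]].
    destruct (H0 Si HSi S (or_introl eq_refl)) as [Y [[<-|[]] HY]]. apply HY; auto.
  - intros X HX. destruct (IHsub X HX) as [Y [HY HXY]]. exists Y; split; auto.
    apply in_or_app; auto.
  - intros X HX. apply in_concat in HX. destruct HX as [Ti [HTi HX]].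
    apply (H0 Ti HTi X HX).
  - eapply le_ty_trans. apply (ty_eqv_le _ _ H).
    eapply le_ty_trans. exact IHsub. apply (ty_eqv_le _ _ H0).
  - apply le_ty_refl.
  - eapply le_ty_trans; eauto.
Qed.

Lemma raw_eqv_refl {A} (r : raw A) : raw_eqv r r.
Proof.
  induction r as [a|S T HS HT] using raw_ind'.
  - constructor.
  - apply req_arrow with (S0 := S) (T0 := T); auto.
    + clear HT. induction HS; constructor; auto.
    + induction HT; constructor; auto. exists x; split; auto.
      clear -H. induction H; constructor; auto.
Qed.

Lemma F2_refl {X} (R : X -> X -> Prop) l : (forall x, R x x) -> Forall2 R l l.
Proof. intros H; induction l; constructor; auto. Qed.

Lemma perm_subs_eqv {A} (S S' : subs A) : Permutation S S' -> subs_eqv S S'.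
Proof. intros H; exists S'; split; auto. apply F2_refl, raw_eqv_refl. Qed.

Lemma subs_eqv_refl {A} (S : subs A) : subs_eqv S S.
Proof. apply perm_subs_eqv; auto. Qed.

Lemma perm_ty_eqv {A} (T T' : ty A) : Permutation T T' -> ty_eqv T T'.
Proof. intros H; exists T'; split; auto. apply F2_refl, subs_eqv_refl. Qed.

Lemma ty_eqv_refl {A} (T : ty A) : ty_eqv T T.
Proof. apply perm_ty_eqv; auto. Qed.

Lemma sub_pick_S {A} (S : subs A) x y :
  In x S -> sub false [[x]] [[y]] -> sub false [S] [[y]].
Proof.
  intros Hx Hs. destruct (in_split _ _ Hx) as [l1 [l2 E]]; subst.
  apply sub_conv with (T1' := [[x] ++ (l1 ++ l2)]) (T2' := [[y]]).
  - exists [l1 ++ x :: l2]; split; auto. constructor; [|constructor].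
    apply perm_subs_eqv. simpl. apply Permutation_sym, Permutation_middle.
  - apply ty_eqv_refl.
  - apply sub_interL; auto.
Qed.

Lemma concat_single {X} (l : list X) : concat (map (fun y => [y]) l) = l.
Proof. induction l; simpl; congruence. Qed.

Lemma subs_complete {A} (S S' : subs A) :
  (forall y, In y S' -> exists x, In x S /\ sub false [[x]] [[y]]) -> sub false [S] [S'].
Proof.
  intros H. rewrite <- (concat_single S'). apply sub_interR.
  intros Si HSi. apply in_map_iff in HSi. destruct HSi as [y [<- Hy]].
  destruct (H y Hy) as [x [Hx Hxy]]. eapply sub_pick_S; eauto.
Qed.

Lemma ty_complete {A} (T T' : ty A) :
  (forall X, In X T -> exists Y, In Y T' /\ sub false [X] [Y]) -> sub false T T'.
Proof.
  intros H. rewrite <- (concat_single T). apply sub_unionL.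
  intros Ti HTi. apply in_map_iff in HTi. destruct HTi as [X [<- HX]].
  destruct (H X HX) as [Y [HY HXY]].
  destruct (in_split _ _ HY) as [l1 [l2 E]]; subst.
  apply sub_conv with (T1' := [X]) (T2' := (l1 ++ l2) ++ [Y]).
  - apply ty_eqv_refl.
  - apply perm_ty_eqv. eapply Permutation_trans.
    apply Permutation_sym, Permutation_middle. apply Permutation_cons_append.
  - apply sub_unionR; auto.
Qed.

Lemma arrow_help {A} (S S' : subs A) (T T' : ty A) :
  (forall y, In y S -> exists x, In x S' /\ sub false [[x]] [[y]]) ->
  (forall X, In X T -> exists Y, In Y T' /\ forall y, In y Y -> exists x, In x X /\ sub false [[x]] [[y]]) ->
  sub false [[Arrow S T]] [[Arrow S' T']].
Proof.
  intros H1 H2. apply sub_arrow.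
  - apply subs_complete; auto.
  - apply ty_complete. intros X HX. destruct (H2 X HX) as [Y [HY HXY]].
    exists Y; split; auto. apply subs_complete; auto.
Qed.

Lemma complete_raw {A} (r : raw A) : forall r',
  (le_raw r r' -> sub false [[r]] [[r']]) /\ (le_raw r' r -> sub false [[r']] [[r]]).
Proof.
  induction r as [a|S T HS HT] using raw_ind'; intros r'.
  - split; intros H; inversion H; subst; constructor.
  - rewrite Forall_forall in HS, HT. split; intros H.
    + inversion H as [|S1 T1 S' T' H1 H2]; subst. apply arrow_help.
      * intros y Hy. destruct (H1 y Hy) as [x [Hx Hxy]]. exists x; split; auto.
        apply (proj2 (HS y Hy x)); auto.
      * intros X HX. destruct (H2 X HX) as [Y [HY HXY]]. exists Y; split; auto.
        intros y Hy. destruct (HXY y Hy) as [x [Hx Hxy]]. exists x; split; auto.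
        specialize (HT X HX); rewrite Forall_forall in HT.
        apply (proj1 (HT x Hx y)); auto.
    + inversion H as [|S' T' S1 T1 H1 H2]; subst. apply arrow_help.
      * intros y Hy. destruct (H1 y Hy) as [x [Hx Hxy]]. exists x; split; auto.
        apply (proj1 (HS x Hx y)); auto.
      * intros X HX. destruct (H2 X HX) as [Y [HY HXY]]. exists Y; split; auto.
        intros y Hy. destruct (HXY y Hy) as [x [Hx Hxy]]. exists x; split; auto.
        specialize (HT Y HY); rewrite Forall_forall in HT.
        apply (proj2 (HT y Hy x)); auto.
Qed.

Theorem lemma3p4 (A : Type) (T T' : ty A) :
  sub true T T' -> sub false T T'.
Proof.
  intros H. apply sound in H. apply ty_complete. intros X HX.
  destruct (H X HX) as [Y [HY HXY]]. exists Y; split; auto.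
  apply subs_complete. intros y Hy. destruct (HXY y Hy) as [x [Hx Hxy]].
  exists x; split; auto. apply (proj1 (complete_raw x y)); auto.
Qed.
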